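(* For all integers $n, m, k \ge 0$, the map $\phi$ defined below restricts to a bijection from the set of Dyck paths of semilength $n$ with $m$ contacts and $k$ up-steps at odd height onto the set of Dyck paths of semilength $n$ with $m$ contacts and $k$ peaks. Definition of $\phi:\mathcal D\to\mathcal D$ (on Dyck words): $\phi(\epsilon)=\epsilon$ for the empty word $\epsilon$. A nonempty Dyck word $W$ whose path has $s\ge 0$ down-steps at height $2$ before its first contact decomposes uniquely as $W = U\big(\prod_{i=1}^{s} U W_i D\big) D W_{s+1}$ with each $W_i$ a Dyck word, and then $$\phi(W) = \Big(\prod_{i=1}^{s} U\,\phi(W_i)\Big)\, U D\, D^{s}\, \phi(W_{s+1}).$$
   Context: Paths have steps $(1,1)$ (up-step, letter $U$) and $(1,-1)$ (down-step, letter $D$), start at $(0,0)$; paths and words in $\{U,D\}$ are identified. A Dyck path is such a path ending on the line $y=0$ with no vertex of negative $y$-coordinate; a Dyck word is the corresponding word (equal numbers of $U$ and $D$, no prefix with more $D$s than $U$s). $\mathcal D$ denotes the set of Dyck paths/words. The semilength of a path is half its number of steps. An up-step is at height $j$ if it goes from $(i-1,j-1)$ to $(i,j)$; a down-step is at height $j$ if it goes from $(i,j)$ to $(i+1,j-1)$; a step is at odd height if $j$ is odd. A peak is an up-step immediately followed by a down-step. A contact is a down-step at height $1$ or an up-step at height $0$. Products $\prod$ denote concatenation of words, $D^s$ is $s$ copies of $D$. *)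

(* Defs.v *)
From mathcomp Require Import all_boot.
Set Implicit Arguments. Unset Strict Implicit. Unset Printing Implicit Defensive.

Definition U := true.
Definition D := false.

Fixpoint dyck_h (h : nat) (w : seq bool) : bool :=
  match w with
  | [::] => h == 0
  | b :: w' => if b then dyck_h h.+1 w' else (0 < h) && dyck_h h.-1 w'
  end.
Definition dyck (w : seq bool) : bool := dyck_h 0 w.

(* number of down-steps at height 1 (a down-step from height h to h-1 is at height h) *)
Fixpoint contacts_h (h : nat) (w : seq bool) : nat :=
  match w with
  | [::] => 0
  | b :: w' => if b then contacts_h h.+1 w' else (h == 1) + contacts_h h.-1 w'
  end.
Definition contacts (w : seq bool) : nat := contacts_h 0 w.

(* number of up-steps at odd height (an up-step from h to h+1 is at height h+1) *)
Fixpoint oddups_h (h : nat) (w : seq bool) : nat :=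
  match w with
  | [::] => 0
  | b :: w' => if b then odd h.+1 + oddups_h h.+1 w' else oddups_h h.-1 w'
  end.
Definition oddups (w : seq bool) : nat := oddups_h 0 w.

Fixpoint peaks (w : seq bool) : nat :=
  match w with
  | b :: ((c :: _) as w') => (b && ~~ c) + peaks w'
  | _ => 0
  end.

(* For a Dyck word U A D B (A, B Dyck, the displayed D being the first return),
   split_ret 1 (A ++ D :: B) = (A, B). *)
Fixpoint split_ret (h : nat) (w : seq bool) : seq bool * seq bool :=
  match w with
  | [::] => ([::], [::])
  | b :: w' =>
    if b then let: (a, r) := split_ret h.+1 w' in (true :: a, r)
    else if h <= 1 then ([::], w')
    else let: (a, r) := split_ret h.-1 w' in (false :: a, r)
  end.

(* factors_f: a Dyck word A = (U W_1 D)(U W_2 D)...(U W_s D) is sent to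
   [:: W_1; ...; W_s]  (fuel-bounded, fuel = size suffices). *)
Fixpoint factors_f (fuel : nat) (a : seq bool) : seq (seq bool) :=
  match fuel with
  | 0 => [::]
  | f.+1 =>
    match a with
    | [::] => [::]
    | _ :: a' => let: (x, y) := split_ret 1 a' in x :: factors_f f y
    end
  end.

(* phi on Dyck words:  phi(eps) = eps, and for
   W = U (prod_{i=1}^s U W_i D) D W_{s+1},
   phi(W) = (prod_{i=1}^s U phi(W_i)) U D D^s phi(W_{s+1}).
   Fuel-bounded recursion; phi uses fuel = size w, which is sufficient. *)
Fixpoint phi_f (fuel : nat) (w : seq bool) : seq bool :=
  match fuel with
  | 0 => [::]
  | f.+1 =>
    match w with
    | [::] => [::]
    | _ :: w' =>
      let: (a, b) := split_ret 1 w' in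
      let ws := factors_f f a in
      flatten [seq U :: phi_f f x | x <- ws]
        ++ [:: U; D] ++ nseq (size ws) D ++ phi_f f b
    end
  end.
Definition phi (w : seq bool) : seq bool := phi_f (size w) w.

Definition src_set (n m k : nat) (w : seq bool) : Prop :=
  [/\ dyck w, size w = n.*2, contacts w = m & oddups w = k].
Definition tgt_set (n m k : nat) (w : seq bool) : Prop :=
  [/\ dyck w, size w = n.*2, contacts w = m & peaks w = k].

Example ex1 : phi [:: U; U; D; U; D; D; U; D] = [:: U; U; U; D; D; D; U; D].
Proof. by []. Qed.

(* Main.v *)
Require Import Defs.
From mathcomp Require Import all_boot zify.
Set Implicit Arguments. Unset Strict Implicit.

Lemma catL (s a b : seq bool) : s ++ a = s ++ b -> a = b.
Proof. by elim: s => //= x s IH [] /IH. Qed.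

Lemma dyck_cat x y h j : dyck_h j x -> dyck_h (h + j) (x ++ y) = dyck_h h y.
Proof.
elim: x j => [|b x IH] j /=; first by move/eqP->; rewrite addn0.
case: b => [/IH|/andP[j0 /IH]]; first by rewrite addnS.
by case: j j0 => // j _ /=; rewrite addnS /= => ->.
Qed.

Lemma dyck_app x y : dyck x -> dyck y -> dyck (x ++ y).
Proof. by rewrite /dyck => Hx; have := @dyck_cat _ y 0 _ Hx; rewrite add0n => ->. Qed.

Lemma dyck_app_inv x y : dyck x -> dyck (x ++ y) -> dyck y.
Proof. by rewrite /dyck => Hx; have := @dyck_cat _ y 0 _ Hx; rewrite add0n => ->. Qed.

Lemma dyck_prime Y Z : dyck Y -> dyck Z -> dyck (true :: Y ++ false :: Z).
Proof. by rewrite /dyck /= => HY; have := @dyck_cat _ (false :: Z) 1 _ HY; rewrite addn0 => ->. Qed.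

Lemma contacts_cat x y j : dyck_h j x -> contacts_h j.+1 (x ++ y) = contacts_h 1 y.
Proof.
elim: x j => [|b x IH] j /=; first by move/eqP->.
case: b => [/IH //|/andP[j0 /IH]].
by case: j j0 => // j _ /= ->.
Qed.

Lemma contacts_prime Y Z : dyck Y -> contacts (true :: Y ++ false :: Z) = (contacts Z).+1.
Proof. by rewrite /dyck /contacts /= => /contacts_cat ->. Qed.

Lemma oddups_cat x y h j : dyck_h j x ->
  oddups_h (h + j) (x ++ y) = oddups_h (h + j) x + oddups_h h y.
Proof.
elim: x j => [|b x IH] j /=; first by move/eqP->; rewrite addn0.
case: b => [/IH|/andP[j0 /IH]]; first by rewrite addnS -addnA => ->.
by case: j j0 => // j _ /=; rewrite addnS /=.
Qed.

Lemma oddups_shift x i j : dyck_h j x -> oddups_h (i.*2 + j) x = oddups_h j x.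
Proof.
elim: x j => [|b x IH] j //=.
case: b => [/IH|/andP[j0 /IH]]; first by rewrite -addnS => ->; rewrite oddD odd_double.
by case: j j0 => // j _ /=; rewrite addnS /=.
Qed.

Lemma peaks_cat x y : peaks (x ++ y) = peaks x + peaks y + (last false x && ~~ head true y).
Proof.
elim: x => [|b x IH] /=; first by rewrite addn0.
case: x IH => [|c x] IH.
  by case: y {IH} => [|c y] /=; rewrite ?andbF // add0n addnC.
by move: IH => /= ->; rewrite !addnA.
Qed.

Lemma dyck_head p : dyck p -> head true p.
Proof. by case: p => [|[] p]. Qed.

Lemma split_cat x y j : dyck_h j x -> split_ret j.+1 (x ++ false :: y) = (x, y).
Proof.
elim: x j => [|b x IH] j /=; first by move/eqP->.
case: b => [/IH -> //|/andP[j0 /IH]].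
by case: j j0 => // j _ /= ->.
Qed.

Lemma prime_inj Y1 Y2 Z1 Z2 : dyck Y1 -> dyck Y2 ->
  true :: Y1 ++ false :: Z1 = true :: Y2 ++ false :: Z2 -> Y1 = Y2 /\ Z1 = Z2.
Proof.
move=> H1 H2 [] /(congr1 (split_ret 1)); rewrite !split_cat //. by case.
Qed.

Lemma first_ret n w h : size w <= n -> dyck_h h.+1 w ->
  exists A B, [/\ w = A ++ false :: B, dyck A & dyck_h h B].
Proof.
elim: n w h => [|n IH] [|b w] h //= Hs.
case: b => Hd; last by exists [::], w.
have [A1 [B1 [Ew HA1 HB1]]] := IH w h.+1 Hs Hd.
have Hs2 : size B1 <= n by move: Hs; rewrite Ew size_cat /=; lia.
have [A2 [B2 [EB HA2 HB2]]] := IH B1 h Hs2 HB1.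
rewrite Ew EB.
exists (true :: A1 ++ false :: A2), B2; split => //.
- by rewrite /= -!catA.
- exact: dyck_prime.
Qed.

Definition Fw (ws : seq (seq bool)) := flatten [seq true :: x ++ [:: false] | x <- ws].
Fixpoint Hin (ps : seq (seq bool)) : seq bool :=
  if ps is p :: ps' then p ++ true :: Hin ps' ++ [:: false] else [::].

Lemma Fw_cons x ws : Fw (x :: ws) = true :: x ++ false :: Fw ws.
Proof. by rewrite /Fw /= -catA. Qed.

Lemma dyck_Fw ws : all dyck ws -> dyck (Fw ws).
Proof.
elim: ws => // x ws IH /andP[Hx /IH Hw]; rewrite Fw_cons.
have -> : true :: x ++ false :: Fw ws = (true :: x ++ [:: false]) ++ Fw ws by rewrite /= -catA.
by apply: dyck_app => //; apply: dyck_prime.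
Qed.

Lemma dyck_Hin ps : all dyck ps -> dyck (Hin ps).
Proof.
elim: ps => // p ps IH /andP[Hp /IH Hw] /=.
by apply: dyck_app => //; apply: dyck_prime.
Qed.

Lemma dyck_factors n A : size A <= n -> dyck A ->
  exists ws, A = Fw ws /\ all dyck ws.
Proof.
elim: n A => [|n IH] [|b A] //= Hs; try by exists [::].
rewrite /dyck /=; case: b => // Hd.
have [X [Y [EA HX HY]]] := @first_ret _ _ _ (leqnn _) Hd; subst A.
have Hs2 : size Y <= n by move: Hs; rewrite size_cat /=; lia.
have [ws [-> Hws]] := IH Y Hs2 HY.
by exists (X :: ws); rewrite Fw_cons; split => //; apply/andP.
Qed.

Lemma dec w : dyck w -> w <> [::] ->
  exists ws B, [/\ w = true :: Fw ws ++ false :: B, all dyck ws & dyck B].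
Proof.
case: w => // -[] w; rewrite /dyck //= => Hd _.
have [A [B [-> HA HB]]] := @first_ret _ _ _ (leqnn _) Hd.
have [ws [-> Hws]] := @dyck_factors _ _ (leqnn _) HA.
by exists ws, B.
Qed.

Lemma size_Fw ws : size ws <= size (Fw ws).
Proof. by elim: ws => // x ws IH; rewrite Fw_cons /= size_cat /=; lia. Qed.

Lemma size_in_Fw ws x : x \in ws -> size x < size (Fw ws).
Proof.
elim: ws => // y ws IH; rewrite in_cons Fw_cons /= size_cat /=.
case/orP => [/eqP->|/IH H]; first by rewrite ltnS leq_addr.
apply: (ltn_trans H); rewrite ltnS addnS; apply: leqW; exact: leq_addl.
Qed.

Lemma size_in_Hin ps p : p \in ps -> size p <= size (Hin ps).
Proof.
elim: ps => //= q ps IH; rewrite in_cons size_cat /= size_cat /=.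
case/orP => [/eqP->|/IH H]; first by rewrite leq_addr.
move: H; set a := size p; set b := size (Hin ps); set c := size q; lia.
Qed.

Lemma factors_Fw fuel ws : all dyck ws -> size ws <= fuel -> factors_f fuel (Fw ws) = ws.
Proof.
elim: ws fuel => [|x ws IH] [|f] // /andP[Hx Hws] Hs.
by rewrite Fw_cons /= split_cat // IH.
Qed.

Lemma fuel_ok f g w : dyck w -> size w <= f -> size w <= g -> phi_f f w = phi_f g w.
Proof.
elim: f g w => [|f IH] g w Hd Hf Hg.
  by case: w Hd Hf Hg => //; case: g.
case: w Hd Hf Hg => [|b w'] Hd Hf Hg; first by case: g Hg.
have [ws [B [Ew Hws HB]]] := dec Hd ltac:(by []).
case: g Hg => [|g] Hg0; first by [].
rewrite Ew in Hf Hg0 *.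
have HFw := dyck_Fw Hws.
rewrite /= !split_cat //.
have Hsz : size (true :: Fw ws ++ false :: B) = (size (Fw ws) + size B).+2
  by rewrite /= size_cat /= addnS.
rewrite Hsz in Hf Hg0.
have Hs1 := size_Fw ws.
rewrite !factors_Fw //; try lia.
rewrite (IH g B) //; try lia.
congr (flatten _ ++ _).
apply/eq_in_map => x Hx; congr (_ :: _).
have := size_in_Fw Hx => Hxs.
apply: IH; [by move/allP: Hws; apply| |];
 move: Hxs Hf Hg0; set a1 := size x; set b1 := size (Fw ws); set c1 := size B; lia.
Qed.

Lemma G_H (f : seq bool -> seq bool) ws Z :
  flatten [seq true :: f x | x <- ws] ++ [:: true; false] ++ nseq (size ws) false ++ Z
  = true :: Hin (map f ws) ++ false :: Z.
Proof.
elim: ws Z => //= x ws IH Z.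
have E : false :: nseq (size ws) false ++ Z = nseq (size ws) false ++ false :: Z.
  by elim: (size ws) => //= n <-.
rewrite -!catA /= E.
have := IH (false :: Z) => /= ->.
by rewrite -catA.
Qed.

Lemma phi_eq ws B : all dyck ws -> dyck B ->
  phi (true :: Fw ws ++ false :: B) = true :: Hin (map phi ws) ++ false :: phi B.
Proof.
move=> Hws HB.
have HFw := dyck_Fw Hws.
rewrite /phi /= split_cat // size_cat /=.
have Hs1 := size_Fw ws.
rewrite factors_Fw //; last by lia.
rewrite -(G_H phi).
rewrite (@fuel_ok _ (size B) B) //; try lia.
congr (flatten _ ++ _).
apply/eq_in_map => x Hx; congr (_ :: _).
have := size_in_Fw Hx => Hxs.
apply: fuel_ok => //; [by move/allP: Hws; apply|];
 move: Hxs; set a1 := size x; set b1 := size (Fw ws); set c1 := size B; lia.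
Qed.

Lemma oddups_Fw ws : all dyck ws -> oddups_h 1 (Fw ws) = sumn (map oddups ws).
Proof.
elim: ws => // x ws IH /andP[Hx Hws].
rewrite Fw_cons.
have -> : true :: x ++ false :: Fw ws = (true :: x ++ [:: false]) ++ Fw ws by rewrite /= -catA.
have Hp : dyck_h 0 (true :: x ++ [:: false]) by apply: (@dyck_prime x [::]).
have := @oddups_cat _ (Fw ws) 1 0 Hp; rewrite addn0 => ->; rewrite IH //.
have := @oddups_cat x [:: false] 2 0 Hx; rewrite addn0 /= => ->.
have := @oddups_shift x 1 0 Hx; rewrite addn0 => ->.
by rewrite addn0.
Qed.

Lemma oddups_W ws B : all dyck ws -> dyck B ->
  oddups (true :: Fw ws ++ false :: B) = (sumn (map oddups ws) + oddups B).+1.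
Proof.
move=> Hws HB; have HFw := dyck_Fw Hws.
rewrite /oddups /=.
have := @oddups_cat _ (false :: B) 1 0 HFw; rewrite addn0 => ->.
by rewrite oddups_Fw.
Qed.

Lemma peaks_H ps Z : all dyck ps ->
  peaks (true :: Hin ps ++ false :: Z) = sumn (map peaks ps) + 1 + peaks Z.
Proof.
elim: ps Z => [|p ps IH] Z; first by case: Z.
move=> /andP[Hp Hps].
set Y := true :: Hin ps ++ false :: false :: Z.
have -> : true :: Hin (p :: ps) ++ false :: Z = [:: true] ++ (p ++ Y).
  by rewrite /Y /= -!catA /= -catA.
have hY : head true Y = true by [].
have hp : head true (p ++ Y) = true.
  by case: p Hp {IH} => [|[] p].
rewrite peaks_cat hp peaks_cat hY /Y IH //; clear Y hY hp.
have -> : peaks (false :: Z) = peaks Z by case: Z.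
by rewrite /= andbF !addn0 add0n !addnA.
Qed.

Lemma size_Hin_map (f : seq bool -> seq bool) ws :
  {in ws, forall x, size (f x) = size x} -> size (Hin (map f ws)) = size (Fw ws).
Proof.
elim: ws => // x ws IH Hin'.
rewrite Fw_cons /= !size_cat /= size_cat IH; last by move=> y Hy; apply: Hin'; rewrite in_cons Hy orbT.
by rewrite Hin' ?in_cons ?eqxx // addn1 addnS.
Qed.

Lemma main1 n w : size w <= n -> dyck w ->
  [/\ dyck (phi w), size (phi w) = size w, contacts (phi w) = contacts w & peaks (phi w) = oddups w].
Proof.
elim: n w => [|n IH] w Hs Hd.
  by case: w Hs Hd.
case: w Hs Hd => [|b w'] Hs Hd; first by [].
have [ws [B [Ew Hws HB]]] := dec Hd ltac:(by []).
rewrite Ew in Hs *.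
have Hsz : size (true :: Fw ws ++ false :: B) = (size (Fw ws) + size B).+2
  by rewrite /= size_cat /= addnS.
rewrite Hsz in Hs.
have IHx : forall x, x \in ws -> [/\ dyck (phi x), size (phi x) = size x,
     contacts (phi x) = contacts x & peaks (phi x) = oddups x].
  move=> x Hx; have := size_in_Fw Hx => Hxs.
  apply: IH; last by move/allP: Hws; apply.
  by move: Hxs Hs; set a1 := size x; set b1 := size (Fw ws); set c1 := size B; lia.
have [IB1 IB2 IB3 IB4] : [/\ dyck (phi B), size (phi B) = size B,
     contacts (phi B) = contacts B & peaks (phi B) = oddups B].
  by apply: IH => //; lia.
have Hps : all dyck (map phi ws).
  by apply/allP => y /mapP [x Hx ->]; case: (IHx x Hx).
have HFw := dyck_Fw Hws.
rewrite phi_eq //; split.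
- by apply: dyck_prime => //; apply: dyck_Hin.
- rewrite Hsz /= size_cat /= size_Hin_map ?IB2 ?addnS //.
  by move=> x Hx; case: (IHx x Hx).
- by rewrite !contacts_prime ?IB3 //; apply: dyck_Hin.
- rewrite peaks_H // oddups_W // IB4 -map_comp.
  have -> : [seq (peaks \o phi) x | x <- ws] = [seq oddups x | x <- ws].
    by apply/eq_in_map => x Hx /=; case: (IHx x Hx).
  by rewrite addn1 addSn.
Qed.

Lemma last_prime_le p1 p2 Y1 Y2 : size p1 <= size p2 -> dyck p1 -> dyck p2 -> dyck Y1 ->
  p1 ++ true :: Y1 ++ [:: false] = p2 ++ true :: Y2 ++ [:: false] -> p1 = p2.
Proof.
move=> Hle H1 H2 HY1 E.
have Ht : take (size p1) p2 = p1.
  have := congr1 (take (size p1)) E.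
  by rewrite take_size_cat // takel_cat // => <-.
set q := drop (size p1) p2.
have Ep2 : p2 = p1 ++ q by rewrite -{1}(cat_take_drop (size p1) p2) Ht.
rewrite Ep2 -catA in E; move/catL: E => E.
have Hq : dyck q by apply: (dyck_app_inv H1); rewrite -Ep2.
case Eq: q Hq E => [|b q'] Hq E; first by rewrite Ep2 Eq cats0.
have [ws [B [Ew Hws HB]]] := dec Hq ltac:(by []).
rewrite Ew in E.
have : true :: Y1 ++ false :: [::] = true :: Fw ws ++ false :: (B ++ true :: Y2 ++ [:: false]).
  by rewrite E /= -catA.
case/prime_inj => //; first exact: dyck_Fw.
by move=> _; case: B {Ew HB E}.
Qed.

Lemma last_prime p1 p2 Y1 Y2 : dyck p1 -> dyck p2 -> dyck Y1 -> dyck Y2 ->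
  p1 ++ true :: Y1 ++ [:: false] = p2 ++ true :: Y2 ++ [:: false] -> p1 = p2 /\ Y1 = Y2.
Proof.
move=> H1 H2 HY1 HY2 E.
have Ep : p1 = p2.
  case: (leqP (size p1) (size p2)) => Hs; first exact: (last_prime_le Hs H1 H2 HY1 E).
  by symmetry; apply: (last_prime_le (ltnW Hs) H2 H1 HY2 (esym E)).
split => //; rewrite Ep in E; move/catL: E => [].
by rewrite !cats1; apply: rcons_injl.
Qed.

Lemma Hin_inj ps1 ps2 : all dyck ps1 -> all dyck ps2 -> Hin ps1 = Hin ps2 -> ps1 = ps2.
Proof.
elim: ps1 ps2 => [|p1 ps1 IH] [|p2 ps2] //=.
- by move=> _ _ /(congr1 size); rewrite size_cat /=; case: (size p2).
- by move=> _ _ /(congr1 size); rewrite size_cat /=; case: (size p1).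
move=> /andP[Hp1 Hs1] /andP[Hp2 Hs2] E.
have [-> E2] := last_prime Hp1 Hp2 (dyck_Hin Hs1) (dyck_Hin Hs2) E.
by rewrite (IH ps2).
Qed.

Lemma phi_nil : phi [::] = [::].
Proof. by []. Qed.

Lemma map_phi_inj ws1 ws2 : all dyck ws1 -> all dyck ws2 ->
  (forall x1 x2, x1 \in ws1 -> dyck x1 -> dyck x2 -> phi x1 = phi x2 -> x1 = x2) ->
  map phi ws1 = map phi ws2 -> ws1 = ws2.
Proof.
elim: ws1 ws2 => [|x1 ws1 IHw] [|x2 ws2] //= /andP[Hx1 Hs1] /andP[Hx2 Hs2] Hi [] Ex E'.
rewrite (Hi x1 x2) ?in_cons ?eqxx // (IHw ws2) // => y1 y2 Hy; apply: Hi.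
by rewrite in_cons Hy orbT.
Qed.

Lemma main2 n w1 w2 : size w1 <= n -> dyck w1 -> dyck w2 -> phi w1 = phi w2 -> w1 = w2.
Proof.
elim: n w1 w2 => [|n IH] w1 w2 Hs Hd1 Hd2 E.
  case: w1 Hs Hd1 E => // _ _ E.
  case: w2 Hd2 E => // b w2 Hd2 E.
  have [ws [B [Ew Hws HB]]] := dec Hd2 ltac:(by []).
  by move: E; rewrite Ew phi_eq.
case: w1 Hs Hd1 E => [|b1 w1] Hs Hd1 E.
  case: w2 Hd2 E => // b w2 Hd2 E.
  have [ws [B [Ew Hws HB]]] := dec Hd2 ltac:(by []).
  by move: E; rewrite Ew phi_eq.
case: w2 Hd2 E => [|b2 w2] Hd2 E.
  have [ws [B [Ew Hws HB]]] := dec Hd1 ltac:(by []).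
  by move: E; rewrite Ew phi_eq.
have [ws1 [B1 [Ew1 Hws1 HB1]]] := dec Hd1 ltac:(by []).
have [ws2 [B2 [Ew2 Hws2 HB2]]] := dec Hd2 ltac:(by []).
rewrite Ew1 Ew2 !phi_eq // in E *.
rewrite Ew1 /= size_cat /= in Hs.
have Hm : forall ws, all dyck ws -> all dyck (map phi ws).
  move=> ws Hws; apply/allP => y /mapP [x Hx ->].
  by case: (@main1 _ x (leqnn _)) => //; move/allP: Hws; apply.
have [EH EB] := prime_inj (dyck_Hin (Hm _ Hws1)) (dyck_Hin (Hm _ Hws2)) E.
have -> : B1 = B2 by apply: IH => //; lia.
have := Hin_inj (Hm _ Hws1) (Hm _ Hws2) EH.
have Hsz : forall x, x \in ws1 -> size x <= n.
  move=> x Hx; have := size_in_Fw Hx.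
  by move: Hs; set a2 := size x; set b3 := size (Fw ws1); set c2 := size B1; lia.
move=> Em; have -> // : ws1 = ws2.
apply: (map_phi_inj Hws1 Hws2 _ Em) => x1 x2 Hx; apply: IH; exact: Hsz.
Qed.

Lemma last_prime_ex n Y : size Y <= n -> dyck Y -> Y <> [::] ->
  exists p Y', [/\ Y = p ++ true :: Y' ++ [:: false], dyck p & dyck Y'].
Proof.
elim: n Y => [|n IH] Y Hs Hd Hne; first by case: Y Hs Hd Hne.
have [ws [B [Ew Hws HB]]] := dec Hd Hne.
have HFw := dyck_Fw Hws.
case EB: B HB Ew => [|b B'] HB Ew.
  by exists [::], (Fw ws); rewrite Ew.
rewrite -EB in HB Ew.
have HsB : size B <= n by move: Hs; rewrite Ew /= size_cat /=; set a1 := size B; set b1 := size (Fw ws); lia.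
have [p' [Y' [EB' Hp' HY']]] := IH B HsB HB ltac:(by rewrite EB).
exists (true :: Fw ws ++ false :: p'), Y'; split => //.
- by rewrite Ew EB' /= -catA.
- exact: dyck_prime.
Qed.

Lemma Hin_surj n Y : size Y <= n -> dyck Y -> exists ps, Y = Hin ps /\ all dyck ps.
Proof.
elim: n Y => [|n IH] Y Hs Hd.
  by case: Y Hs Hd => // _ _; exists [::].
case: (Y =P [::]) => [EY0|Hne]; first by exists [::]; rewrite EY0.
have [p [Y' [EY Hp HY']]] := last_prime_ex (leqnn _) Hd Hne.
have HsY : size Y' <= n by move: Hs; rewrite EY size_cat /= size_cat /=; set a1 := size Y'; set b1 := size p; lia.
have [ps [EY' Hps]] := IH Y' HsY HY'.
by exists (p :: ps); rewrite EY EY'; split => //; apply/andP.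
Qed.

Lemma choose_list ps : (forall p, p \in ps -> exists2 w, dyck w & phi w = p) ->
  exists ws, all dyck ws /\ map phi ws = ps.
Proof.
elim: ps => [|p ps IH] H; first by exists [::].
have [w Hw Ew] := H p (mem_head _ _).
have [ws [Hws Ews]] := IH (fun q Hq => H q ltac:(by rewrite in_cons Hq orbT)).
by exists (w :: ws); rewrite /= Hw Hws Ew Ews.
Qed.

Lemma main3 n v : size v <= n -> dyck v -> exists2 w, dyck w & phi w = v.
Proof.
elim: n v => [|n IH] v Hs Hd.
  by case: v Hs Hd => // _ _; exists [::].
case: (v =P [::]) => [Ev0|Hne]; first by exists [::] => //; rewrite Ev0.
case: v Hs Hd Hne => [|b v'] //; rewrite /dyck /=; case: b => // Hs Hd _.
have [Y [Z [Ev HY HZ]]] := @first_ret _ _ _ (leqnn _) Hd; subst v'.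
rewrite size_cat /= in Hs.
have [ps [EY Hps]] := Hin_surj (leqnn _) HY.
have [ws [Hws Ews]] : exists ws, all dyck ws /\ map phi ws = ps.
  apply: choose_list => p Hp; apply: IH; last by move/allP: Hps; apply.
  have := size_in_Hin Hp; rewrite -EY.
  by move: Hs; set a1 := size p; set b1 := size Y; set c1 := size Z; lia.
have [wZ HwZ EwZ] := IH Z ltac:(lia) HZ.
exists (true :: Fw ws ++ false :: wZ).
  by apply: dyck_prime => //; apply: dyck_Fw.
by rewrite phi_eq // Ews EwZ EY.
Qed.

Unset Implicit Arguments.

Theorem theorem1 (n m k : nat) :
  [/\ (forall w, src_set n m k w -> tgt_set n m k (phi w)),
      (forall w1 w2, src_set n m k w1 -> src_set n m k w2 -> phi w1 = phi w2 -> w1 = w2)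
    & (forall v, tgt_set n m k v -> exists2 w, src_set n m k w & phi w = v)].
Proof.
split.
- move=> w [Hd Hs Hc Ho].
  have [H1 H2 H3 H4] := main1 (leqnn _) Hd.
  by split => //; rewrite ?H2 ?H3 ?H4.
- move=> w1 w2 [Hd1 _ _ _] [Hd2 _ _ _]; exact: main2 (leqnn _) Hd1 Hd2.
- move=> v [Hd Hs Hc Hp].
  have [w Hw Ew] := main3 (leqnn _) Hd.
  exists w => //.
  have [H1 H2 H3 H4] := main1 (leqnn _) Hw.
  by rewrite Ew in H2 H3 H4; split => //; rewrite -?H2 -?H3 -?H4.
Qed.
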